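(* Let $d$ be a translation-invariant distance on $\mathbb R^2$ (i.e. $d(p+q,p+q')=d(q,q')$ for all $p,q,q'$) which induces the Euclidean topology, and let $d_E$ be the Euclidean distance. Then there exist a neighborhood $U$ of $0$ and a constant $C>0$ such that $d_E(p,0)\le C\, d(p,0)$ for all $p\in U$. *)

(* Defs.v *)
From Stdlib Require Import Reals.
Open Scope R_scope.

Definition pt := (R * R)%type.

Definition padd (p q : pt) : pt := (fst p + fst q, snd p + snd q).
Definition origin : pt := (0, 0).

Definition dE (p q : pt) : R :=
  sqrt ((fst p - fst q) ^ 2 + (snd p - snd q) ^ 2).

Definition is_metric (d : pt -> pt -> R) : Prop :=
  (forall p q, 0 <= d p q) /\
  (forall p q, d p q = 0 <-> p = q) /\
  (forall p q, d p q = d q p) /\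
  (forall p q r, d p r <= d p q + d q r).

Definition translation_invariant (d : pt -> pt -> R) : Prop :=
  forall p q q', d (padd p q) (padd p q') = d q q'.

Definition metric_open (d : pt -> pt -> R) (S : pt -> Prop) : Prop :=
  forall x, S x -> exists eps, 0 < eps /\ forall y, d x y < eps -> S y.

Definition induces_euclidean_topology (d : pt -> pt -> R) : Prop :=
  forall S : pt -> Prop, metric_open d S <-> metric_open dE S.

Definition euclid_nbhd (U : pt -> Prop) (p : pt) : Prop :=
  exists r, 0 < r /\ forall q, dE p q < r -> U q.

(* Main.v *)
Require Import Defs.
From Stdlib Require Import Reals Lra Lia ZArith.
Open Scope R_scope.

Definition scal (n : nat) (p : pt) : pt := (INR n * fst p, INR n * snd p).

Lemma scal_bound (d : pt -> pt -> R) (Hd : is_metric d)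
  (Htr : translation_invariant d) :
  forall n p, d (scal n p) origin <= INR n * d p origin.
Proof.
  destruct Hd as [H0 [H1 [Hs Ht]]].
  induction n as [|n IH]; intros p.
  - simpl. unfold scal, origin; simpl.
    replace (0 * fst p, 0 * snd p) with (0,0) by (f_equal; ring).
    assert (d (0,0) (0,0) = 0) by (apply H1; reflexivity). lra.
  - assert (E1 : scal (S n) p = padd (scal n p) p).
    { unfold scal, padd; cbn [fst snd]; rewrite S_INR; f_equal; ring. }
    assert (E2 : scal n p = padd (scal n p) origin).
    { unfold scal, padd, origin; simpl; f_equal; ring. }
    specialize (Ht (scal (S n) p) (scal n p) origin).
    assert (d (scal (S n) p) (scal n p) = d p origin).
    { rewrite E1. rewrite E2 at 2. apply Htr. }
    specialize (IH p). rewrite S_INR. lra.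
Qed.

Lemma abs_le_dE (x y : pt) : Rabs (fst x - fst y) <= dE x y /\ Rabs (snd x - snd y) <= dE x y.
Proof.
  unfold dE. split.
  - rewrite <- (sqrt_pow2 (Rabs (fst x - fst y))) by apply Rabs_pos.
    apply sqrt_le_1_alt. rewrite pow2_abs.
    assert (0 <= (snd x - snd y)^2) by (apply pow2_ge_0). lra.
  - rewrite <- (sqrt_pow2 (Rabs (snd x - snd y))) by apply Rabs_pos.
    apply sqrt_le_1_alt. rewrite pow2_abs.
    assert (0 <= (fst x - fst y)^2) by (apply pow2_ge_0). lra.
Qed.

Lemma dE_le_sum (p : pt) : dE p origin <= Rabs (fst p) + Rabs (snd p).
Proof.
  unfold dE, origin; simpl.
  assert (0 <= Rabs (fst p)) by apply Rabs_pos.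
  assert (0 <= Rabs (snd p)) by apply Rabs_pos.
  rewrite <- (sqrt_pow2 (Rabs (fst p) + Rabs (snd p))) by lra.
  apply sqrt_le_1_alt.
  rewrite !Rminus_0_r.
  assert (E1 := pow2_abs (fst p)). assert (E2 := pow2_abs (snd p)). nra.
Qed.

Theorem mainTheorem9 (d : pt -> pt -> R)
  (Hd : is_metric d)
  (Htr : translation_invariant d)
  (Htop : induces_euclidean_topology d) :
  exists (U : pt -> Prop) (C : R),
    euclid_nbhd U origin /\ 0 < C /\
    forall p, U p -> dE p origin <= C * d p origin.
Proof.
  set (S := fun q : pt => Rabs (fst q) < 1 /\ Rabs (snd q) < 1).
  assert (HS : metric_open dE S).
  { intros x [Hx1 Hx2]. exists (Rmin (1 - Rabs (fst x)) (1 - Rabs (snd x))).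
    split. { apply Rmin_glb_lt; lra. }
    intros y Hy. destruct (abs_le_dE x y) as [A B].
    assert (Hm1 := Rmin_l (1 - Rabs (fst x)) (1 - Rabs (snd x))).
    assert (Hm2 := Rmin_r (1 - Rabs (fst x)) (1 - Rabs (snd x))).
    split.
    - assert (Rabs (fst y) <= Rabs (fst x) + Rabs (fst x - fst y)).
      { replace (fst y) with (fst x - (fst x - fst y)) at 1 by ring.
        apply Rabs_triang_inv2 || (unfold Rminus; eapply Rle_trans; [apply Rabs_triang|rewrite Rabs_Ropp; lra]). }
      lra.
    - assert (Rabs (snd y) <= Rabs (snd x) + Rabs (snd x - snd y)).
      { replace (snd y) with (snd x - (snd x - snd y)) at 1 by ring.
        unfold Rminus at 1; eapply Rle_trans; [apply Rabs_triang|rewrite Rabs_Ropp; lra]. }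
      lra. }
  apply Htop in HS.
  destruct (HS origin) as [eps [Heps Hball]].
  { unfold S, origin; simpl; rewrite Rabs_R0; lra. }
  destruct Hd as [H0 [H1 [Hs Ht]]].
  exists (fun q => dE origin q < 1), (5 / eps).
  split. { exists 1; split; [lra| auto]. }
  split. { unfold Rdiv; apply Rmult_lt_0_compat; [lra | apply Rinv_0_lt_compat; lra]. }
  intros p Hp.
  assert (Hsym : dE p origin = dE origin p).
  { unfold dE. f_equal. ring. }
  assert (Hdpos := H0 p origin).
  set (a := Rabs (fst p) + Rabs (snd p)).
  assert (Ha0 : 0 <= a) by (unfold a; assert (0 <= Rabs (fst p)) by apply Rabs_pos;
                              assert (0 <= Rabs (snd p)) by apply Rabs_pos; lra).
  assert (HdEa := dE_le_sum p). fold a in HdEa.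
  assert (Key : dE p origin * eps <= 5 * d p origin).
  { destruct (Rle_lt_dec a 2) as [Ha2 | Ha2].
    - destruct (Req_dec a 0) as [Ha | Ha].
      { assert (0 <= dE p origin) by (unfold dE; apply sqrt_pos). assert (Hz : dE p origin = 0) by lra. rewrite Hz; lra. }
      assert (Hapos : 0 < a) by lra.
      destruct (archimed (2 / a)) as [Hz1 Hz2].
      set (z := up (2 / a)) in *.
      assert (H2a : 0 < 2 / a) by (unfold Rdiv; apply Rmult_lt_0_compat; [lra|apply Rinv_0_lt_compat; lra]).
      assert (Hzpos : (0 < z)%Z) by (apply lt_0_IZR; lra).
      set (n := Z.to_nat z).
      assert (Hn : INR n = IZR z).
      { unfold n. rewrite INR_IZR_INZ. rewrite Z2Nat.id; [reflexivity | lia]. }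
      assert (Hza : IZR z * a > 2).
      { replace 2 with (2 / a * a) by (field; lra). apply Rmult_lt_compat_r; lra. }
      assert (Hza2 : IZR z * a <= 4).
      { assert (2 / a * a = 2) by (field; lra).
        assert (1 <= 2 / a).
        { apply Rmult_le_reg_r with a; [lra|]. rewrite H. lra. }
        nra. }
      assert (Hnot : ~ S (scal n p)).
      { unfold S, scal; simpl. rewrite !Rabs_mult, Hn.
        rewrite (Rabs_pos_eq (IZR z)) by lra. unfold a in Hza. intros [A B]. nra. }
      assert (Hge : eps <= d (scal n p) origin).
      { destruct (Rle_lt_dec eps (d (scal n p) origin)) as [h|h]; [exact h|].
        exfalso. apply Hnot, Hball. rewrite Hs. exact h. }
      assert (Hb := scal_bound d (conj H0 (conj H1 (conj Hs Ht))) Htr n p).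
      rewrite Hn in Hb.
      assert (eps <= IZR z * d p origin) by lra.
      assert (a * eps <= a * (IZR z * d p origin)) by (apply Rmult_le_compat_l; lra).
      assert (dE p origin * eps <= a * eps) by (apply Rmult_le_compat_r; lra).
      nra.
    - assert (Hnot : ~ S p).
      { unfold S. unfold a in Ha2. intros [A B]. lra. }
      assert (Hge : eps <= d p origin).
      { destruct (Rle_lt_dec eps (d p origin)) as [h|h]; [exact h|].
        exfalso. apply Hnot, Hball. rewrite Hs. exact h. }
      rewrite Hsym. assert (0 <= dE origin p) by (unfold dE; apply sqrt_pos).
      nra.
  }
  apply Rmult_le_reg_r with eps; [lra|].
  replace (5 / eps * d p origin * eps) with (5 * d p origin) by (field; lra).
  exact Key.
Qed.
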